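(* Let $A$ be a ring and $b,s,t\in A$. (a) If $t\in\bigcap_{i\ge0}(bA+s^iA)$, then $W(b,s,t)=\bigcap_{i\ge0}(bA+s^iA)$. (b) If $bA+sA+tA=A$, or if $b,s,t$ is an $A$-regular sequence, then $W(b,s,t)=\bigcap_{i\ge0}(bA+sA)^i$.
   Context: For elements $b,s,t$ of a ring $A$, define ideals $W_i,J_i$ ($i\ge0$) by $W_0=A$, $J_0=(W_0:t)=A$, and for $i\ge1$: $W_i=bJ_{i-1}+s^iA$ and $J_i=(W_i:t)$, where $(W:t)=\{x\in A: tx\in W\}$. Set $W(b,s,t)=\bigcap_{i\ge0}W_i$. *)

(* Defs.v *)
From HB Require Import structures.
From mathcomp Require Import all_boot all_order all_algebra.
Set Implicit Arguments. Unset Strict Implicit. Unset Printing Implicit Defensive.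
Import GRing.Theory.
Local Open Scope ring_scope.

(* Ideals of a commutative ring A are represented as predicates A -> Prop. *)

Section IdealDefs.
Variable A : comPzRingType.

Definition ideal2 (a c : A) : A -> Prop :=
  fun x => exists y z : A, x = a * y + c * z.
Definition ideal3 (a c d : A) : A -> Prop :=
  fun x => exists y z w : A, x = a * y + c * z + d * w.

Definition colon (W : A -> Prop) (t : A) : A -> Prop := fun x => W (t * x).

Definition idealMul (I J : A -> Prop) : A -> Prop :=
  fun x => exists (n : nat) (f g : 'I_n -> A),
    (forall k, I (f k) /\ J (g k)) /\ x = \sum_(k < n) f k * g k.

Fixpoint idealPow (I : A -> Prop) (i : nat) : A -> Prop :=
  match i with
  | 0 => fun _ => True
  | i'.+1 => idealMul (idealPow I i') I
  end.

Fixpoint Wi (b s t : A) (i : nat) : A -> Prop :=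
  match i with
  | 0 => fun _ => True
  | i'.+1 => fun x => exists y z : A,
      colon (Wi b s t i') t y /\ x = b * y + s ^+ i'.+1 * z
  end.

Definition Ji (b s t : A) (i : nat) : A -> Prop := colon (Wi b s t i) t.

Definition Wbst (b s t : A) : A -> Prop := fun x => forall i, Wi b s t i x.

Definition regular_seq3 (b s t : A) : Prop :=
  [/\ (forall x : A, b * x = 0 -> x = 0),
      (forall x : A, ideal2 b 0 (s * x) -> ideal2 b 0 x),
      (forall x : A, ideal2 b s (t * x) -> ideal2 b s x)
    & ~ ideal3 b s t 1].
End IdealDefs.

(* Main.v *)
Require Import Defs.
From mathcomp Require Import all_boot all_order all_algebra ring.
Local Open Scope ring_scope.
Import GRing.Theory.

Section Aux.
Variable A : comPzRingType.
Variables b s t : A.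

Fixpoint Q (i : nat) : A -> Prop :=
  match i with
  | 0 => fun _ => True
  | i'.+1 => fun x => exists u v, Q i' u /\ x = b * u + s ^+ i'.+1 * v
  end.

Lemma Q0 i : Q i 0.
Proof. case: i => [|i] //=; exists 0, 0; split; [|ring]. by elim: i => [|i IH] //=; exists 0, 0; split; [|ring]. Qed.

Lemma QD i x y : Q i x -> Q i y -> Q i (x + y).
Proof.
elim: i x y => [|i IH] x y //= [u1 [v1 [H1 ->]]] [u2 [v2 [H2 ->]]].
exists (u1 + u2), (v1 + v2); split; [exact: IH | ring].
Qed.

Lemma QM i x c : Q i x -> Q i (x * c).
Proof.
elim: i x => [|i IH] x //= [u [v [H ->]]].
exists (u * c), (v * c); split; [exact: IH | ring].
Qed.

Lemma QMl i x c : Q i x -> Q i (c * x).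
Proof. by rewrite mulrC; apply: QM. Qed.

Lemma Qs i v : Q i (s ^+ i * v).
Proof. case: i => [|i] //=; exists 0, v; split; [exact: Q0 | ring]. Qed.

Lemma Qb i x : Q i x -> Q i.+1 (b * x).
Proof. move=> H; exists x, 0; split => //; ring. Qed.

Lemma Qsm i x : Q i x -> Q i.+1 (s * x).
Proof.
elim: i x => [|i IH] x /=.
  by move=> _; exists 0, x; split => //; rewrite expr1; ring.
move=> [u [v [H ->]]]; exists (s * u), v; split; first exact: IH.
rewrite (exprS s i.+1); ring.
Qed.

Lemma Qsum i n (f : 'I_n -> A) : (forall k, Q i (f k)) -> Q i (\sum_(k < n) f k).
Proof.
move=> H; elim/big_ind: _ => //; [exact: Q0 | exact: QD].
Qed.

Lemma idealPowM i x c : idealPow (ideal2 b s) i x -> idealPow (ideal2 b s) i (x * c).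
Proof.
case: i => [|i] //= [n [f [g [Hfg ->]]]].
exists n, f, (fun k => g k * c); split.
  move=> k; have [H1 [y [z Hg]]] := Hfg k; split => //.
  exists (y * c), (z * c); rewrite Hg; ring.
rewrite mulr_suml; apply: eq_bigr => k _; ring.
Qed.

Lemma idealPow_s i v : idealPow (ideal2 b s) i (s ^+ i * v).
Proof.
elim: i v => [|i IH] v //=.
exists 1%N, (fun _ => s ^+ i * v), (fun _ => s); split.
  move=> k; split; first exact: IH.
  by exists 0, 1; ring.
rewrite big_ord1 exprS; ring.
Qed.

Lemma Q_pow i x : Q i x <-> idealPow (ideal2 b s) i x.
Proof.
elim: i x => [|i IH] x //=; split.
  move=> [u [v [Hu ->]]].
  exists 2%N, (fun k => if val k == 0%N then u else s ^+ i * v), (fun k => if val k == 0%N then b else s).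
  split.
    move=> k; case: ifP => _; split.
    - exact/IH.
    - by exists 1, 0; ring.
    - exact: idealPow_s.
    - by exists 0, 1; ring.
  rewrite big_ord_recr big_ord1 /= exprS; ring.
move=> [n [f [g [Hfg ->]]]]; change (Q i.+1 (\sum_(k < n) f k * g k)); apply: Qsum => k.
have [/IH H1 [y [z ->]]] := Hfg k.
rewrite mulrDr; apply: QD.
  by rewrite mulrCA; apply: Qb; apply: QM.
by rewrite mulrCA; apply: Qsm; apply: QM.
Qed.

Lemma W_Q (C : forall i x, Q i (t * x) -> Q i x) i x : Wi b s t i x <-> Q i x.
Proof.
elim: i x => [|i IH] x //=; split.
  move=> [y [z [Hy ->]]]; exists y, z; split => //.
  by apply: C; apply/IH.
move=> [y [z [Hy ->]]]; exists y, z; split => //.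
by rewrite /colon; apply/IH; apply: QMl.
Qed.

Lemma comax (H : ideal3 b s t 1) i : exists e w, Q i e /\ 1 = e + t * w.
Proof.
elim: i => [|i [e [w [He Hew]]]].
  by exists 1, 0; split => //; ring.
have [y [z [w0 E]]] := H.
exists (e * (b * y + s * z)), (e * w0 + w * (b * y + s * z + t * w0)); split.
  rewrite mulrDr; apply: QD.
    by rewrite mulrCA; apply: Qb; apply: QM.
  by rewrite mulrCA; apply: Qsm; apply: QM.
transitivity (1 * 1 : A); first by rewrite mulr1.
rewrite {1}Hew {1}E; ring.
Qed.

Lemma C1 (H : ideal3 b s t 1) i x : Q i (t * x) -> Q i x.
Proof.
move=> Ht; have [e [w [He Hew]]] := comax H i.
have -> : x = e * x + (t * x) * w.
  by transitivity ((e + t * w) * x); [rewrite -Hew mul1r | ring].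
by apply: QD; [apply: QM | apply: QM].
Qed.

Hypothesis Hb : forall x : A, b * x = 0 -> x = 0.
Hypothesis Hs : forall x : A, ideal2 b 0 (s * x) -> ideal2 b 0 x.
Hypothesis Ht : forall x : A, ideal2 b s (t * x) -> ideal2 b s x.

Lemma L1 n y : ideal2 b 0 (s ^+ n * y) -> ideal2 b 0 y.
Proof.
elim: n y => [|n IH] y; first by rewrite expr0 mul1r.
by rewrite exprSr -mulrA => /IH /Hs.
Qed.

Lemma L2 n y : ideal2 b (s ^+ n) (t * y) -> ideal2 b (s ^+ n) y.
Proof.
elim: n y => [|n IH] y.
  by move=> _; exists 0, y; rewrite expr0; ring.
move=> [u [v E]].
have [p [q Ey]] : ideal2 b (s ^+ n) y.
  by apply: IH; exists u, (s * v); rewrite E exprS; ring.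
have : ideal2 b 0 (s ^+ n * (t * q - s * v)).
  exists (u - t * p), 0.
  have -> : s ^+ n * (t * q - s * v) = t * (b * p + s ^+ n * q) - s ^+ n.+1 * v - b * (t * p).
    by rewrite exprSr; ring.
  by rewrite -Ey E; ring.
move=> /L1 [r [r' Er]].
have : ideal2 b s (t * q) by exists r, v; rewrite -[t * q](subrK (s * v)) Er; ring.
move=> /Ht [p' [q' Eq]].
exists (p + s ^+ n * p'), q'; rewrite Ey Eq exprSr; ring.
Qed.

Lemma Qsub i x : Q i.+1 x -> ideal2 b (s ^+ i.+1) x.
Proof. by move=> [u [v [_ ->]]]; exists u, v. Qed.

Lemma C2 i x : Q i (t * x) -> Q i x.
Proof.
elim: i x => [|i IH] x //.
move=> Htx; have [p [q Ex]] := L2 _ _ (Qsub _ _ Htx).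
move: Htx => [u [v [Hu E]]].
have : ideal2 b 0 (s ^+ i.+1 * (v - t * q)).
  exists (t * p - u), 0.
  have : b * u + s ^+ i.+1 * v = t * x by rewrite E.
  rewrite Ex => E2.
  rewrite mulrBr mulrBr.
  have -> : s ^+ i.+1 * v = t * (b * p + s ^+ i.+1 * q) - b * u by rewrite -E2; ring.
  ring.
move=> /L1 [r [r' Er]].
have Etp : t * p = u + s ^+ i.+1 * r.
  have E2 : b * u + s ^+ i.+1 * v = t * (b * p + s ^+ i.+1 * q) by rewrite -Ex E.
  have Ev : v = b * r + 0 * r' + t * q by rewrite -Er; ring.
  apply/eqP; rewrite -subr_eq0; apply/eqP; apply: Hb.
  have -> : b * (t * p - (u + s ^+ i.+1 * r)) =
     t * (b * p + s ^+ i.+1 * q) - (b * u + s ^+ i.+1 * (b * r + 0 * r' + t * q)) by ring.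
  by rewrite -Ev -E2 subrr.
exists p, q; split => //.
apply: IH; rewrite Etp; apply: QD => //.
rewrite exprS -mulrA mulrC; apply: QM; exact: Qs.
Qed.

End Aux.

Theorem lemma3p4 (A : comPzRingType) (b s t : A) :
  ((forall i : nat, ideal2 b (s ^+ i) t) ->
     forall x : A, Wbst b s t x <-> (forall i : nat, ideal2 b (s ^+ i) x)) /\
  ((forall x : A, ideal3 b s t x) \/ regular_seq3 b s t ->
     forall x : A, Wbst b s t x <-> (forall i : nat, idealPow (ideal2 b s) i x)).
Proof.
split.
  move=> Hti.
  have key : forall i x, Wi b s t i x <-> ideal2 b (s ^+ i) x.
    elim=> [|i IH] x /=.
      by split => // _; exists 0, x; rewrite expr0; ring.
    split.
      by move=> [y [z [_ ->]]]; exists y, z.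
    move=> [y [z ->]]; exists y, z; split => //.
    apply/IH; have [y0 [z0 ->]] := Hti i.
    by exists (y0 * y), (z0 * y); ring.
  by move=> x; split => H i; apply/key.
move=> Hc.
have C : forall i x, @Q A b s i (t * x) -> @Q A b s i x.
  case: Hc => [H | [Hb Hs Ht _]].
    exact: (@C1 A b s t (H 1)).
  exact: (@C2 A b s t Hb Hs Ht).
move=> x; split => H i.
  exact: (proj1 (@Q_pow A b s i x) (proj1 (@W_Q A b s t C i x) (H i))).
exact: (proj2 (@W_Q A b s t C i x) (proj2 (@Q_pow A b s i x) (H i))).
Qed.
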